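(* Let $(C,D)$ define an irreducible MSPP (a MAP with $C$ diagonal). Then the squared coefficient of variation of the event-stationary inter-event time satisfies $c^2\ge 1$; equivalently $\boldsymbol{\pi}C\mathbf{1}\,\boldsymbol{\pi}C^{-1}\mathbf{1}\ge 1$.
   Context: A Markovian arrival process (MAP) of order $p$ is specified by $p\times p$ real matrices $C$ and $D$ such that $D$ has nonnegative entries, $C$ has nonnegative off-diagonal entries, and $Q=C+D$ is the generator (row sums zero) of an irreducible continuous-time Markov chain on $\{1,\dots,p\}$; $C$ is assumed nonsingular. An MSPP is a MAP with $C$ diagonal. $\mathbf{1}$ is the all-ones column vector; $\boldsymbol{\pi}$ is the stationary distribution of $Q$; $\boldsymbol{\alpha}$ is the stationary distribution of $P=(-C)^{-1}D$. The event-stationary inter-event time $T_1^{\alpha}$ has $\mathbb{P}(T_1^{\alpha}>t)=\boldsymbol{\alpha}e^{Ct}\mathbf{1}$, and $c^2=\mathrm{Var}(T_1^{\alpha})/\mathbb{E}^2[T_1^{\alpha}]$, which satisfies $c^2+1=2\,\boldsymbol{\pi}C\mathbf{1}\,\boldsymbol{\pi}C^{-1}\mathbf{1}$. *)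

(* Defs.v *)
From HB Require Import structures.
From mathcomp Require Import all_boot all_order all_algebra.
Set Implicit Arguments. Unset Strict Implicit. Unset Printing Implicit Defensive.
Import Order.TTheory GRing.Theory Num.Theory.
Local Open Scope ring_scope.

Definition ones (R : realFieldType) (p : nat) : 'cV[R]_p := const_mx 1.

Definition is_generator (R : realFieldType) (p : nat) (Q : 'M[R]_p) : Prop :=
  (forall i j : 'I_p, i != j -> 0 <= Q i j) /\
  (forall i : 'I_p, \sum_(j < p) Q i j = 0).

Definition irreducible_gen (R : realFieldType) (p : nat) (Q : 'M[R]_p) : Prop :=
  forall i j : 'I_p, connect [rel a b : 'I_p | (a != b) && (0 < Q a b)] i j.

Definition is_irreducible_MAP (R : realFieldType) (p : nat) (C D : 'M[R]_p) : Prop :=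
  [/\ forall i j : 'I_p, 0 <= D i j,
      forall i j : 'I_p, i != j -> 0 <= C i j,
      is_generator (C + D),
      irreducible_gen (C + D) &
      C \in unitmx].

Definition is_irreducible_MSPP (R : realFieldType) (p : nat) (C D : 'M[R]_p) : Prop :=
  is_irreducible_MAP C D /\ is_diag_mx C.

Definition is_stationary_dist (R : realFieldType) (p : nat) (Q : 'M[R]_p)
  (pi : 'rV[R]_p) : Prop :=
  [/\ forall i : 'I_p, 0 <= pi 0 i, \sum_(i < p) pi 0 i = 1 & pi *m Q = 0].

(* Main.v *)
Require Import Defs.
From HB Require Import structures.
From mathcomp Require Import all_boot all_order all_algebra.
From mathcomp Require Import ring lra.
Import Order.TTheory GRing.Theory Num.Theory.
Open Scope ring_scope.

Lemma key (R : realFieldType) (p : nat) (w a : 'I_p -> R) :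
  (forall i, 0 <= w i) -> (forall i, 0 < a i) -> \sum_i w i = 1 ->
  1 <= (\sum_i w i * a i) * (\sum_i w i / a i).
Proof.
move=> w0 a0 w1; set A := \sum_i w i * a i.
have A0 : 0 < A.
  rewrite lt_def sumr_ge0 ?andbT => [|i _]; last by rewrite mulr_ge0 // ltW.
  apply/negP => /eqP/psumr_eq0P H.
  have : \sum_i w i = 0.
    apply: big1 => i _.
    have /eqP : w i * a i = 0 by apply: H => // j _; rewrite mulr_ge0 // ltW.
    by rewrite mulf_eq0 (gt_eqF (a0 i)) orbF => /eqP.
  by rewrite w1 => /eqP; rewrite oner_eq0.
have le1 : \sum_i w i * (2 / A - a i / A ^+ 2) <= \sum_i w i / a i.
  apply: ler_sum => i _; apply: ler_wpM2l => //.
  rewrite -subr_ge0.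
  have -> : (a i)^-1 - (2 / A - a i / A ^+ 2) = (a i - A) ^+ 2 / (a i * A ^+ 2).
    by field; rewrite (gt_eqF A0) (gt_eqF (a0 i)).
  by rewrite divr_ge0 ?sqr_ge0 // mulr_ge0 // ?exprn_ge0 // ltW.
have E : \sum_i w i * (2 / A - a i / A ^+ 2) = A^-1.
  under eq_bigr => i _ do rewrite mulrBr !mulrA.
  rewrite sumrB -mulr_suml -mulr_suml w1 -/A.
  rewrite -mulr_suml -/A mul1r. by field; rewrite (gt_eqF A0).
rewrite E in le1; have := ler_wpM2l (ltW A0) le1; rewrite mulfV ?gt_eqF //.
Qed.

Lemma ones_entry (R : realFieldType) (p : nat) (M : 'rV[R]_p) :
  (M *m ones R p) 0 0 = \sum_i M 0 i.
Proof. by rewrite mxE; apply: eq_bigr => i _; rewrite mxE mulr1. Qed.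

Theorem corollary1 (R : realFieldType) (p : nat) (C D : 'M[R]_p) (pi : 'rV[R]_p)
  (hMSPP : is_irreducible_MSPP C D)
  (hpi : is_stationary_dist (C + D) pi) :
  1 <= (pi *m C *m ones R p) 0 0 * (pi *m invmx C *m ones R p) 0 0.
Proof.
case: hMSPP => [[hD hCoff [hoff hrow] _ hU] /is_diag_mxP hdiag].
case: hpi => [hpi0 hpi1 _].
set d : 'rV[R]_p := \row_i C i i.
have Cd : C = diag_mx d.
  apply/matrixP => i j; rewrite !mxE; case: (eqVneq i j) => [->|ij].
    by rewrite mulr1n.
  by rewrite mulr0n hdiag.
have dle : forall i, C i i <= 0.
  move=> i; have := hrow i.
  rewrite (eq_bigr (fun j => C i j + D i j)); last by move=> j _; rewrite mxE.
  rewrite big_split /= (bigD1 i) //= big1 ?addr0; last first.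
    by move=> j ji; rewrite hdiag // eq_sym.
  move=> /eqP; rewrite addr_eq0 => /eqP ->.
  by rewrite oppr_le0 sumr_ge0.
have dne : forall i, C i i != 0.
  move=> i; apply/eqP => ci0.
  move: hU; rewrite unitmxE Cd det_diag unitfE (bigD1 i) //= mxE ci0 mul0r.
  by rewrite eqxx.
have dlt : forall i, C i i < 0 by move=> i; rewrite lt_def eq_sym dne dle.
have Ci : invmx C = diag_mx (\row_i (C i i)^-1).
  have h1 : C *m diag_mx (\row_i (C i i)^-1) = 1%:M.
    rewrite Cd mulmx_diag; apply/matrixP => i j; rewrite !mxE.
    by rewrite eqxx mulr1n mulfV.
  by have := mulKmx hU (diag_mx (\row_i (C i i)^-1)); rewrite h1 mulmx1.
rewrite Ci {1}Cd !mul_mx_diag !ones_entry.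
have := @key R p (fun i => pi 0 i) (fun i => - C i i) hpi0
  (fun i => ltac:(rewrite oppr_gt0; exact: dlt i)) hpi1.
congr (_ <= _); rewrite -mulrNN -!sumrN; congr (_ * _); apply: eq_bigr => i _;
  rewrite !mxE ?invrN; ring.
Qed.
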